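(* Let $G = K \rtimes_\varphi \langle t\rangle$ be a finitely generated group, where $K$ is abelian, $\langle t\rangle$ is infinite cyclic and $\varphi\in\mathrm{Aut}(K)$. Let $R$ be a finite symmetric subset of $K$ such that $S=R\cup\{t^{\pm1}\}$ generates $G$. Let $g\in G$ be a minimal length conjugacy representative. (i) If the $t$-exponent sum of $g$ is $0$, then there is $w\in\mathcal C_0$ such that $g$ is represented by some cyclic permutation of $w$. (ii) If the $t$-exponent sum of $g$ is $m>0$, then there is $w\in\mathcal C_m$ such that $g$ is represented by some cyclic permutation of $w$.
   Context: $K$ is written additively; $(x,t^m)$ has $t$-exponent sum $m$; $tkt^{-1}=\varphi(k)$. An element $g$ is a minimal length conjugacy representative if its word length (w.r.t. $S$) is minimal among all its conjugates. $W(R)$ is the set of words in $R$; a word is a geodesic if its freely reduced length equals the word length of the element it represents. $W'$ is the set of geodesic words of the form $t^{-p}u_0\,t\,u_1\,t\cdots u_{d-1}\,t\,u_d\,t^{-q}t^{m}$ with $p,q,m\ge0$, $d=p+q$, $u_i\in W(R)$. $\mathcal C_0=\{u_0tu_1t\cdots u_{d-1}tu_dt^{-d}\in W' : d\ge0,\ u_i\in W(R)\}$ and, for $m>0$, $\mathcal C_m=\{u_0tu_1t\cdots u_{m-1}t\in W' : u_i\in W(R)\}$. A cyclic permutation of a word $s_1\cdots s_\ell$ is a word $s_{j+1}\cdots s_\ell s_1\cdots s_j$. *)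

(* Defs.v *)
From mathcomp Require Import all_boot all_order all_algebra.
Set Implicit Arguments. Unset Strict Implicit. Unset Printing Implicit Defensive.
Import GRing.Theory.
Local Open Scope ring_scope.

(* G = K ⋊_phi <t>, elements (x, m) standing for x t^m, with x : K, m : int.
   phiinv is the inverse automorphism of phi. t k t^-1 = phi k, so
   (x t^m)(y t^n) = (x + phi^m y) t^(m+n). *)

Definition phipow (K : zmodType) (phi phiinv : K -> K) (m : int) : K -> K :=
  match m with
  | Posz n => iter n phi
  | Negz n => iter n.+1 phiinv
  end.

Definition gmul (K : zmodType) (phi phiinv : K -> K) (g h : K * int) : K * int :=
  (g.1 + phipow phi phiinv g.2 h.1, g.2 + h.2).

Definition ginv (K : zmodType) (phi phiinv : K -> K) (g : K * int) : K * int :=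
  (- phipow phi phiinv (- g.2) g.1, - g.2).

Definition gone (K : zmodType) : K * int := (0, 0).

(* Letters of S = R ∪ {t, t^-1}: inl k is the generator k ∈ K,
   inr true is t, inr false is t^-1. Words are seqs of letters. *)
Definition letter (K : zmodType) := (K + bool)%type.

Definition eval_letter (K : zmodType) (l : letter K) : K * int :=
  match l with
  | inl k => (k, 0)
  | inr true => (0, 1)
  | inr false => (0, -1)
  end.

Definition evalw (K : zmodType) (phi phiinv : K -> K) (w : seq (letter K)) : K * int :=
  foldr (fun l acc => gmul phi phiinv (eval_letter l) acc) (gone K) w.

Definition linv (K : zmodType) (l : letter K) : letter K :=
  match l with
  | inl k => inl (- k)
  | inr b => inr (~~ b)
  end.

Definition freduce (K : zmodType) (w : seq (letter K)) : seq (letter K) :=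
  foldr (fun x r => match r with
                    | y :: r' => if y == linv x then r' else x :: r
                    | [::] => [:: x]
                    end) [::] w.

Definition inS (K : zmodType) (R : seq K) (l : letter K) : bool :=
  match l with inl k => k \in R | inr _ => true end.

Definition inR (K : zmodType) (R : seq K) (l : letter K) : bool :=
  match l with inl k => k \in R | inr _ => false end.

Definition word_over (K : zmodType) (R : seq K) (w : seq (letter K)) : bool :=
  all (inS R) w.

Definition geodesic (K : zmodType) (phi phiinv : K -> K) (R : seq K)
    (w : seq (letter K)) : Prop :=
  word_over R w /\
  forall w', word_over R w' -> evalw phi phiinv w' = evalw phi phiinv w ->
    (size (freduce w) <= size w')%N.

Definition join_t (K : zmodType) (us : seq (seq (letter K))) : seq (letter K) :=
  match us with
  | [::] => [::]
  | u :: rest => u ++ flatten [seq inr true :: v | v <- rest]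
  end.

Definition tpow (K : zmodType) (b : bool) (n : nat) : seq (letter K) := nseq n (inr b).

Definition inWprime (K : zmodType) (phi phiinv : K -> K) (R : seq K)
    (w : seq (letter K)) : Prop :=
  geodesic phi phiinv R w /\
  exists (p q m : nat) (us : seq (seq (letter K))),
    size us = (p + q).+1 /\ all (all (inR R)) us /\
    w = tpow K false p ++ join_t us ++ tpow K false q ++ tpow K true m.

Definition inC0 (K : zmodType) (phi phiinv : K -> K) (R : seq K)
    (w : seq (letter K)) : Prop :=
  inWprime phi phiinv R w /\
  exists (d : nat) (us : seq (seq (letter K))),
    size us = d.+1 /\ all (all (inR R)) us /\
    w = join_t us ++ tpow K false d.

(* the set C_m, m > 0: u_0 t u_1 t ... u_{m-1} t, geodesic
   (it lies in W' up to free reduction) *)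
Definition inCm (K : zmodType) (phi phiinv : K -> K) (R : seq K) (m : nat)
    (w : seq (letter K)) : Prop :=
  geodesic phi phiinv R w /\
  exists us : seq (seq (letter K)),
    size us = m /\ all (all (inR R)) us /\
    w = flatten [seq u ++ [:: inr true] | u <- us].

Definition min_conj_rep (K : zmodType) (phi phiinv : K -> K) (R : seq K)
    (g : K * int) : Prop :=
  exists wg, word_over R wg /\ evalw phi phiinv wg = g /\
    forall (h : K * int) (w : seq (letter K)), word_over R w ->
      evalw phi phiinv w = gmul phi phiinv (gmul phi phiinv h g) (ginv phi phiinv h) ->
      (size wg <= size w)%N.

(* Main.v *)
Require Import Defs.
From mathcomp Require Import all_boot all_order all_algebra.
From mathcomp Require Import zify ring.
Import Order.TTheory GRing.Theory Num.Theory.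
Local Open Scope ring_scope.

Section S.
Variables (K : zmodType) (phi phiinv : K -> K).
Hypotheses (phi_add : {morph phi : x y / x + y}) (phiK : cancel phi phiinv)
  (phiinvK : cancel phiinv phi).
Local Notation P := (phipow phi phiinv).

Lemma phiinv_add : {morph phiinv : x y / x + y}.
Proof. by move=> x y; apply: (can_inj phiK); rewrite phi_add !phiinvK. Qed.

Lemma iter_add (f : K -> K) (fadd : {morph f : x y / x + y}) n :
  {morph iter n f : x y / x + y}.
Proof. by elim: n => [|n IH] x y //=; rewrite IH fadd. Qed.

Lemma P_add n : {morph P n : x y / x + y}.
Proof. case: n => n x y /=; [exact: (@iter_add phi phi_add n x y) | exact: (@iter_add phiinv phiinv_add n.+1 x y)]. Qed.

Lemma P0x n : P n 0 = 0.
Proof.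
have h := P_add n 0 0; rewrite addr0 -{1}(addr0 (P n 0)) in h.
by apply: (addrI (P n 0)); rewrite -h.
Qed.

Lemma PN n x : P n (- x) = - P n x.
Proof.
apply/eqP; rewrite -addr_eq0 -P_add addNr; exact/eqP/P0x.
Qed.

Lemma PB n x y : P n (x - y) = P n x - P n y.
Proof. by rewrite P_add PN. Qed.

Lemma P_0 x : P 0 x = x. Proof. by []. Qed.

Lemma P_succ n x : phi (P n x) = P (n + 1) x.
Proof.
case: n => [k|[|k]].
- by have -> : Posz k + 1 = Posz k.+1 by rewrite -addn1 PoszD.
- by rewrite /= phiinvK.
- have -> : Negz k.+1 + 1 = Negz k by rewrite !NegzE; lia.
  by rewrite [P (Negz k.+1) x]/= phiinvK.
Qed.

Lemma P_pred n x : phiinv (P n x) = P (n - 1) x.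
Proof.
case: n => [[|k]|k].
- by [].
- have -> : Posz k.+1 - 1 = Posz k by lia.
  by rewrite [P (Posz k.+1) x]/= phiK.
- by have -> : Negz k - 1 = Negz k.+1 by rewrite !NegzE; lia.
Qed.

Lemma P_comp a b x : P a (P b x) = P (b + a) x.
Proof.
case: a => k.
- elim: k => [|k IH]; first by rewrite addr0.
  have -> : P (Posz k.+1) (P b x) = phi (P (Posz k) (P b x)) by [].
  rewrite IH P_succ.
  by have -> : b + k + 1 = b + Posz k.+1 by lia.
- elim: k => [|k IH].
  + by rewrite -P_pred.
  + have -> : P (Negz k.+1) (P b x) = phiinv (P (Negz k) (P b x)) by [].
    rewrite IH P_pred.
    by have -> : b + Negz k - 1 = b + Negz k.+1 by rewrite !NegzE; lia.
Qed.


Definition isup (l : letter K) : bool := if l is inr b then b else false.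
Definition isdn (l : letter K) : bool := if l is inr b then ~~ b else false.
Definition isl (l : letter K) : bool := if l is inl _ then true else false.
Definition cup (w : seq (letter K)) := count isup w.
Definition cdn (w : seq (letter K)) := count isdn w.
Definition es (w : seq (letter K)) : int := (cup w)%:Z - (cdn w)%:Z.
Definition sgnb (b : bool) : int := if b then 1 else -1.
Definition shift (s : int) (L : seq (int * K)) := [seq (p.1 + s, p.2) | p <- L].
Fixpoint hl (w : seq (letter K)) : seq (int * K) :=
  match w with
  | [::] => [::]
  | inl k :: w' => (0, k) :: hl w'
  | inr b :: w' => shift (sgnb b) (hl w')
  end.
Definition val (L : seq (int * K)) : K := \sum_(p <- L) P p.1 p.2.

Lemma size_hl w : size (hl w) = count isl w.
Proof. by elim: w => [|[k|b] w IH] //=; rewrite ?size_map IH. Qed.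

Lemma size_w w : size w = (count isl w + cup w + cdn w)%N.
Proof. rewrite /cup /cdn; elim: w => [|[k|[]] w IH] //=; rewrite IH; lia. Qed.

Lemma shift_shift s t L : shift s (shift t L) = shift (t + s) L.
Proof. by rewrite /shift -map_comp; apply: eq_map => p /=; rewrite addrA. Qed.

Lemma shift0 L : shift 0 L = L.
Proof. by rewrite /shift; elim: L => [|[h k] L IH] //=; rewrite addr0 IH. Qed.

Lemma shift_cat s L1 L2 : shift s (L1 ++ L2) = shift s L1 ++ shift s L2.
Proof. exact: map_cat. Qed.

Lemma val_cat L1 L2 : val (L1 ++ L2) = val L1 + val L2.
Proof. exact: big_cat. Qed.

Lemma val_shift s L : val (shift s L) = P s (val L).
Proof.
rewrite /val /shift; elim: L => [|p L IH]; first by rewrite !big_nil P0x.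
by rewrite /= !big_cons IH P_add P_comp.
Qed.

Lemma es_cons l w : es (l :: w) = es [:: l] + es w.
Proof. rewrite /es /cup /cdn; case: l => [k|[]] /=; lia. Qed.

Lemma es_cat a b : es (a ++ b) = es a + es b.
Proof. rewrite /es /cup /cdn !count_cat; lia. Qed.

Lemma hl_cat a b : hl (a ++ b) = hl a ++ shift (es a) (hl b).
Proof.
elim: a => [|[k|c] a IH] /=; first by rewrite shift0.
- by rewrite IH.
- rewrite IH shift_cat shift_shift; congr (_ ++ shift _ _).
  rewrite /es /cup /cdn; case: c => /=; lia.
Qed.

Lemma evalw_val w : evalw phi phiinv w = (val (hl w), es w).
Proof.
elim: w => [|[k|c] w IH]; first by rewrite /val big_nil.
- rewrite [evalw _ _ _]/= IH /gmul /= /val big_cons /=; congr (_, _).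
  by rewrite add0r.
- have -> : evalw phi phiinv (inr c :: w) =
    gmul phi phiinv (eval_letter (inr c)) (evalw phi phiinv w) by [].
  rewrite IH /gmul /=; congr (_, _).
  + by rewrite val_shift; case: c; rewrite /= add0r.
  + by rewrite /es /cup /cdn; case: c => /=; lia.
Qed.

Lemma evalw_cat a b : evalw phi phiinv (a ++ b) =
  ((evalw phi phiinv a).1 + P (evalw phi phiinv a).2 (evalw phi phiinv b).1,
   (evalw phi phiinv a).2 + (evalw phi phiinv b).2).
Proof. by rewrite !evalw_val /= hl_cat val_cat val_shift es_cat. Qed.

Lemma rot_conj X Y : evalw phi phiinv (X ++ Y) =
  gmul phi phiinv (gmul phi phiinv (evalw phi phiinv X) (evalw phi phiinv (Y ++ X)))
     (ginv phi phiinv (evalw phi phiinv X)).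
Proof.
rewrite !evalw_cat /gmul /ginv /=.
move: (evalw phi phiinv X) (evalw phi phiinv Y) => [u a] [v b] /=.
congr (_, _); last by ring.
rewrite PN !P_add !P_comp.
have -> : - a + (a + (b + a)) = b + a by ring.
by rewrite addrA addrK.
Qed.


Lemma freduce_size (w : seq (letter K)) : (size (freduce w) <= size w)%N.
Proof.
elim: w => [|x w IH] //.
have -> : freduce (x :: w) = (fun x r => match r with
                    | y :: r' => if y == linv x then r' else x :: r
                    | [::] => [:: x]
                    end) x (freduce w) by [].
move: IH; case: (freduce w) => [|y r] //= IH.
case: ifP => _ /=; lia.
Qed.

Definition Req (m : int) (x y : K) := exists c, y = x + c - P m c.

Lemma Req_refl m x : Req m x x.
Proof. by exists 0; rewrite P0x subr0 addr0. Qed.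

Lemma Req_sym m x y : Req m x y -> Req m y x.
Proof. case=> c ->; exists (- c); by rewrite PN opprK [x + c - _]addrAC addrK subrK. Qed.

Lemma Req_trans m x y z : Req m x y -> Req m y z -> Req m x z.
Proof.
case=> c -> [c' ->]; exists (c + c').
by rewrite P_add opprD !addrA [_ - P m c + c']addrAC.
Qed.

Arguments Req_trans {m x y z}.
Arguments Req_sym {m x y}.
Lemma Req_add m x y x' y' : Req m x y -> Req m x' y' -> Req m (x + x') (y + y').
Proof.
case=> c -> [c' ->]; exists (c + c').
by rewrite P_add opprD addrACA [x + c + _]addrACA.
Qed.

Lemma Req_step m z : Req m z (P m z).
Proof. by exists (- z); rewrite PN opprK subrr add0r. Qed.

Lemma Req_shift m h k (n : int) : Req m (P h k) (P (h + n * m) k).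
Proof.
elim/int_rec: n => [|n IH|n IH].
- by rewrite mul0r addr0; exact: Req_refl.
- apply: (Req_trans IH); have -> : h + n.+1%:Z * m = (h + n%:Z * m) + m.
    by rewrite -addn1 PoszD mulrDl mul1r addrA.
  rewrite -(P_comp m); exact: Req_step.
- apply: (Req_trans IH); apply: Req_sym.
  have -> : h + - (n%:Z) * m = (h + - (n.+1%:Z) * m) + m.
    rewrite -addn1 PoszD; ring.
  rewrite -(P_comp m); exact: Req_step.
Qed.

Lemma Req_val m (N : int * K -> int) L :
  Req m (val L) (val [seq (p.1 + N p * m, p.2) | p <- L]).
Proof.
elim: L => [|p L IH]; first exact: Req_refl.
rewrite /val /= !big_cons; apply: Req_add => //; exact: Req_shift.
Qed.

Lemma Req_conj m x y : Req m x y ->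
  (y, m) = gmul phi phiinv (gmul phi phiinv (x, m) (x, m)) (x, m) \/ True.
Proof. by right. Qed.

Lemma Req_conj' m x y : Req m x y -> exists h,
  (y, m) = gmul phi phiinv (gmul phi phiinv h (x, m)) (ginv phi phiinv h).
Proof.
case=> c ->; exists (c, 0); rewrite /gmul /ginv /=.
by rewrite add0r subr0 PN [c + x]addrC.
Qed.


Definition FM (M : seq (int * K)) (i : nat) : seq K := [seq p.2 | p <- M & p.1 == Posz i].
Definition Hmap (F : nat -> seq K) (l : seq nat) : seq (int * K) :=
  flatten [seq [seq (Posz i, k) | k <- F i] | i <- l].

Lemma GL M N : (forall p, p \in M -> (0 <= p.1) && (p.1 < Posz N)) ->
  perm_eq (Hmap (FM M) (iota 0 N)) M.
Proof.
move=> HM.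
have -> : Hmap (FM M) (iota 0 N) =
    flatten [seq [seq p <- M | p.1 == Posz i] | i <- iota 0 N].
  rewrite /Hmap /FM; congr flatten; apply: eq_map => i.
  rewrite -map_comp -[RHS]map_id; apply/eq_in_map => -[h k].
  by rewrite mem_filter /= => /andP[/eqP -> _].
apply/permP => a; rewrite count_flatten -map_comp.
elim: M HM => [|x M IH] HM.
  by rewrite /=; elim: (iota 0 N) => //.
rewrite /= -IH; last by move=> p Hp; apply: HM; rewrite inE Hp orbT.
have := HM x (mem_head _ _); clear HM IH; case: x => h k /= /andP[h0 hN].
have [n hn] : exists n : nat, h = Posz n by case: h h0 hN => // n _ _; exists n.
subst h; have nN : (n < N)%N by [].
rewrite !sumnE !big_map.
under eq_bigr => i _ do rewrite /= (fun_if (count a)) /=.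
transitivity (\sum_(i <- iota 0 N) ((n == i) * a (Posz n, k) +
                 count a [seq p <- M | p.1 == Posz i])%N).
  apply: eq_bigr => i _; by rewrite eqz_nat /=; case: (n == i); rewrite /= ?mul1n ?mul0n.
rewrite big_split /=; congr (_ + _)%N.
rewrite (bigD1_seq n) ?mem_iota ?iota_uniq //= eqxx mul1n.
rewrite big1_seq ?addr0 ?addn0 // => i /andP[ni _].
by rewrite eq_sym (negbTE ni).
Qed.

Fixpoint build (F : nat -> seq K) (n : nat) : seq (letter K) :=
  match n with
  | 0 => [::]
  | n.+1 => map inl (F 0%N) ++ inr true :: build (fun i => F i.+1) n
  end.

Lemma build_ext F G n : (forall i, F i = G i) -> build F n = build G n.
Proof.
elim: n F G => [|n IH] F G FG //=; rewrite FG; congr (_ ++ _ :: _).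
by apply: IH => i.
Qed.

Lemma build_cat F c e : build F (c + e) = build F c ++ build (fun i => F (i + c)%N) e.
Proof.
elim: c F => [|c IH] F /=; first by apply: build_ext => i; rewrite addn0.
rewrite IH -catA; congr (_ ++ _ :: (_ ++ _)); apply: build_ext => i.
by rewrite addnS.
Qed.

Lemma hl_inl (u : seq K) : hl (map inl u) = [seq (0, k) | k <- u].
Proof. by elim: u => //= k u ->. Qed.

Lemma es_inl (u : seq K) : es (map inl u) = 0.
Proof. by rewrite /es /cup /cdn; elim: u. Qed.

Lemma shift_Hmap F c l :
  shift (Posz c) (Hmap (fun i => F (i + c)%N) l) = Hmap F [seq (i + c)%N | i <- l].
Proof.
rewrite /shift /Hmap map_flatten -!map_comp; congr flatten; apply: eq_map => i /=.
by rewrite -map_comp; apply: eq_map => k /=; rewrite PoszD.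
Qed.

Lemma Hmap_ext F G l : (forall i, F i = G i) -> Hmap F l = Hmap G l.
Proof. by move=> FG; rewrite /Hmap; congr flatten; apply: eq_map => i; rewrite FG. Qed.

Lemma hl_build F n : hl (build F n) = Hmap F (iota 0 n).
Proof.
elim: n F => [|n IH] F //=.
rewrite hl_cat hl_inl es_inl /= shift_shift addr0 IH.
rewrite (@Hmap_ext _ (fun i => F (i + 1)%N)); last by move=> i; rewrite addn1.
rewrite shift_Hmap; rewrite /Hmap /=; congr (_ ++ flatten _).
have -> : iota 1 n = iota (1 + 0) n by [].
rewrite iotaDl; congr map; apply: eq_map => i; exact: addnC.
Qed.

Lemma cup_inl (u : seq K) : cup (map inl u) = 0%N.
Proof. by elim: u. Qed.
Lemma cdn_inl (u : seq K) : cdn (map inl u) = 0%N.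
Proof. by elim: u. Qed.

Lemma cnt_build F n : cup (build F n) = n /\ cdn (build F n) = 0%N.
Proof.
elim: n F => [|n IH] F //=.
have [h1 h2] := IH (fun i => F i.+1).
by rewrite /cup /cdn !count_cat -/(cup _) -/(cdn _) cup_inl cdn_inl /= -/(cup _) -/(cdn _) h1 h2.
Qed.

Lemma join_t_cons2 (u v : seq (letter K)) rest :
  join_t (u :: v :: rest) = u ++ inr true :: join_t (v :: rest).
Proof. by []. Qed.

Lemma jt_build F n : join_t [seq map inl (F i) | i <- iota 0 n.+1] = build F n ++ map inl (F n).
Proof.
elim: n F => [|n IH] F; first by rewrite /= !cats0.
have E : [seq map (@inl K bool) (F i.+1) | i <- iota 0 n.+1] =
         [seq map (@inl K bool) (F i) | i <- iota 1 n.+1].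
  have -> : iota 1 n.+1 = [seq (1 + i)%N | i <- iota 0 n.+1] by exact: (iotaDl 1 0 n.+1).
  by elim: (iota 0 n.+1) => //= i l ->.
have := IH (fun i => F i.+1); rewrite E => {}IH.
have -> : iota 0 n.+2 = [:: 0%N, 1%N & iota 2 n] by [].
move: IH; have -> : iota 1 n.+1 = 1%N :: iota 2 n by [].
rewrite !map_cons join_t_cons2 => ->.
by rewrite -catA.
Qed.




Lemma hl_R (R : seq K) w : word_over R w -> forall p, p \in hl w -> p.2 \in R.
Proof.
elim: w => [_ p|[k|b] w IH]; first by rewrite in_nil.
all: rewrite /word_over /=.
- move=> /andP[hk hw] p; rewrite inE => /orP[/eqP -> //|]; exact: IH.
- by move=> hw p; case/mapP => q /(IH hw) hq ->.
Qed.

Lemma hl_height w p : p \in hl w -> exists j, p.1 = es (take j w).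
Proof.
elim: w p => [|[k|b] w IH] p //=.
- rewrite inE => /orP[/eqP -> |/IH [j ->]]; first by exists 0%N.
  by exists j.+1; rewrite /= /es /cup /cdn.
- case/mapP => q /IH [j hj] ->; exists j.+1; rewrite /= hj.
  by rewrite /es /cup /cdn /=; case: b => /=; lia.
Qed.

Lemma count_take_mono (a : pred (letter K)) i j s : (i <= j)%N ->
  (count a (take i s) <= count a (take j s))%N.
Proof.
move=> ij; rewrite -(minn_idPl ij) take_min.
by rewrite -[X in (_ <= count a X)%N](cat_take_drop i) count_cat leq_addr.
Qed.

Lemma count_take_le (a : pred (letter K)) i s : (count a (take i s) <= count a s)%N.
Proof. by rewrite -[X in (_ <= count a X)%N](cat_take_drop i) count_cat leq_addr. Qed.

Lemma es_take_bound w j1 j2 :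
  es (take j1 w) - es (take j2 w) <= Posz (maxn (cup w) (cdn w)).
Proof.
rewrite /es /cup /cdn.
have u1 := count_take_le isup j1 w; have u2 := count_take_le isup j2 w.
have d1 := count_take_le isdn j1 w; have d2 := count_take_le isdn j2 w.
case: (leqP j2 j1) => hj.
- have := count_take_mono isup _ _ w hj; have := count_take_mono isdn _ _ w hj; lia.
- have hj' := ltnW hj.
  have := count_take_mono isup _ _ w hj'; have := count_take_mono isdn _ _ w hj'; lia.
Qed.

Lemma min_nat_int (f : nat -> int) n : exists i, forall j, (j <= n)%N -> f i <= f j.
Proof.
elim: n => [|n [i Hi]]; first by exists 0%N => j; rewrite leqn0 => /eqP ->.
case: (leP (f i) (f n.+1)) => h.
- exists i => j; rewrite leq_eqVlt => /orP[/eqP -> //|]; exact: Hi.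
- exists n.+1 => j; rewrite leq_eqVlt => /orP[/eqP -> //|/Hi].
  by move/(lt_le_trans h)/ltW.
Qed.

Lemma min_prefix w : exists i, forall j, es (take i w) <= es (take j w).
Proof.
have [i Hi] := min_nat_int (fun j => es (take j w)) (size w).
exists i => j; case: (leqP j (size w)) => hj; first exact: Hi.
by rewrite (take_oversize (ltnW hj)) -{2}(take_size w); apply: Hi.
Qed.

Lemma word_over_build (R : seq K) F n : (forall i k, k \in F i -> k \in R) ->
  word_over R (build F n).
Proof.
elim: n F => [|n IH] F HF //=.
rewrite /word_over all_cat /=; apply/andP; split.
  by rewrite all_map; apply/allP => k hk /=; apply: (HF 0%N).
by apply: IH => i k; apply: HF.
Qed.

Lemma dec (R : seq K) w : word_over R w -> cdn w = 0%N ->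
  exists us v, w = flatten [seq u ++ [:: inr true] | u <- us] ++ v /\
    all (all (inR R)) us /\ all (inR R) v /\ size us = cup w.
Proof.
elim: w => [|[k|[]] w IH] /=.
- by move=> _ _; exists [::], [::].
- move=> /andP[hk hw] hc; have [us [v [-> [h1 [h2 h3]]]]] := IH hw hc.
  case: us h1 h3 => [|u us] h1 h3 /=.
  + by exists [::], (inl k :: v); rewrite /= hk h2 -h3.
  + exists ((inl k :: u) :: us), v; rewrite /= hk -h3 /=; move: h1 => /= /andP[-> ->].
    by [].
- move=> hw hc; have [us [v [-> [h1 [h2 h3]]]]] := IH hw hc.
  exists ([::] :: us), v; rewrite /= h1 h2 h3; split => //.
- by [].
Qed.


Lemma hl_tpow b n : hl (tpow K b n) = [::].
Proof. by elim: n => //= n ->. Qed.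
Lemma cup_tpowf n : cup (tpow K false n) = 0%N.
Proof. by elim: n. Qed.
Lemma cdn_tpowf n : cdn (tpow K false n) = n.
Proof. by rewrite /cdn /tpow count_nseq /= mul1n. Qed.
Lemma isl_tpow b n : count isl (tpow K b n) = 0%N.
Proof. by elim: n. Qed.
Lemma isl_inl (u : seq K) : count isl (map inl u) = size u.
Proof. by elim: u => //= k u ->. Qed.

Lemma Hmap_cat F l1 l2 : Hmap F (l1 ++ l2) = Hmap F l1 ++ Hmap F l2.
Proof. by rewrite /Hmap map_cat flatten_cat. Qed.

Lemma hl_jt F n : hl (join_t [seq map inl (F i) | i <- iota 0 n.+1]) = Hmap F (iota 0 n.+1).
Proof.
rewrite jt_build hl_cat hl_build hl_inl /es (proj1 (cnt_build F n)) (proj2 (cnt_build F n)) subr0.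
rewrite -addn1 iotaD Hmap_cat /= /Hmap /= cats0 add0n; congr (_ ++ _).
by rewrite /shift -map_comp; apply: eq_map => k /=; rewrite add0r.
Qed.


Arguments hl_height {w p}.
Arguments GL {M N}.
Arguments word_over_build {R F n}.
Arguments Req_conj' {m x y}.
Arguments hl_R {R w}.
Lemma main (R : seq K) (g : K * int) (hg : min_conj_rep phi phiinv R g) :
  (g.2 = 0 ->
     exists w, inC0 phi phiinv R w /\ exists j : nat, evalw phi phiinv (rot j w) = g) /\
  (forall m : nat, (0 < m)%N -> g.2 = m%:Z ->
     exists w, inCm phi phiinv R m w /\ exists j : nat, evalw phi phiinv (rot j w) = g).
Proof.
case: hg => wg [Hwo [Hev Hmin]].
have geo : forall w, word_over R w -> (size w <= size wg)%N ->
    (exists h, evalw phi phiinv w = gmul phi phiinv (gmul phi phiinv h g) (ginv phi phiinv h)) ->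
    geodesic phi phiinv R w.
  move=> w Hw Hs [h Hh]; split => // w'' Hw'' Hev''.
  apply: leq_trans (freduce_size w) _; apply: leq_trans Hs _.
  by apply: (Hmin h) => //; rewrite Hev''.
set L := hl wg.
have HgE : g = (val L, es wg) by rewrite -Hev evalw_val.
split.
- move=> g2.
  have es0 : es wg = 0 by rewrite -g2 HgE.
  set d := cup wg.
  have hdn : cdn wg = d.
    move: es0; rewrite /es /d; lia.
  have [i0 Hi0] := min_prefix wg.
  set a := es (take i0 wg).
  have a0 : a <= 0 by have := Hi0 0%N; rewrite take0.
  have hb : forall j1 j2, es (take j1 wg) - es (take j2 wg) <= Posz d.
    by move=> j1 j2; have := es_take_bound wg j1 j2; rewrite hdn maxnn.
  have [c hc] : exists c : nat, a = - (c%:Z).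
    by exists `|a|%N; rewrite (lez0_abs a0) opprK.
  have cd : (c <= d)%N by have := hb 0%N i0; rewrite take0 -/a hc (_ : es [::] = 0) //; lia.
  set M := shift c L.
  have HM : forall p, p \in M -> (0 <= p.1) && (p.1 < Posz d.+1).
    move=> p /mapP [q hq ->] /=; have [j hj] := hl_height hq.
    have := Hi0 j; have := hb j i0; rewrite -hj -/a hc => h1 h2.
    have -> : Posz d.+1 = Posz d + 1 by rewrite -addn1 PoszD.
    move: (q.1) h1 h2 => z h1 h2; apply/andP; split; lia.
  set F := FM M.
  have HF : forall i k, k \in F i -> k \in R.
    move=> i k /mapP [p]; rewrite mem_filter => /andP[_ /mapP [q hq ->]] -> /=.
    exact: (hl_R Hwo q hq).
  set e := (d - c)%N.
  have de : d = (c + e)%N by rewrite subnKC.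
  set A := build F c.
  set B := build (fun i => F (i + c)%N) e ++ map inl (F d) ++ tpow K false d.
  set us := [seq map (@inl K bool) (F i) | i <- iota 0 d.+1].
  set w := join_t us ++ tpow K false d.
  have wAB : w = A ++ B by rewrite /w jt_build -catA /A /B {1}de build_cat -catA.
  have cupw : cup w = d.
    rewrite /w jt_build /cup !count_cat.
    by move: (proj1 (cnt_build F d)) (cup_inl (F d)) (cup_tpowf d); rewrite /cup => -> -> ->; rewrite !addn0.
  have cdnw : cdn w = d.
    rewrite /w jt_build /cdn !count_cat.
    by move: (proj2 (cnt_build F d)) (cdn_inl (F d)) (cdn_tpowf d); rewrite /cdn => -> -> ->.
  have hlw : hl w = Hmap F (iota 0 d.+1) by rewrite /w hl_cat hl_tpow /shift /= cats0 hl_jt.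
  have evw : evalw phi phiinv w = (P c (val L), 0).
    rewrite evalw_val hlw /val (perm_big _ (GL HM)) -/(val M) val_shift.
    by rewrite /es cupw cdnw subrr.
  have eA : evalw phi phiinv A = ((evalw phi phiinv A).1, Posz c).
    by rewrite evalw_val /= /es /A (proj1 (cnt_build F c)) (proj2 (cnt_build F c)) subr0.
  have evBA : evalw phi phiinv (B ++ A) = g.
    have := evalw_cat A B; rewrite -wAB evw eA /=.
    rewrite evalw_cat eA /= HgE es0.
    move: (evalw phi phiinv A).1 (evalw phi phiinv B) => vA [vB eB] /= [E1 E2].
    congr (_, _); last by move: E2; lia.
    have -> : eB = - (c%:Z) by move: E2; lia.
    have -> : val L = P (- (c%:Z)) (P c (val L)) by rewrite P_comp addrN.
    move: E1; rewrite -[iter c phi (val L)]/(P (Posz c) (val L)) => ->.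
    rewrite P_add -[iter c phi vB]/(P (Posz c) vB) P_comp addrN addrC //.
  have sizew : size w = size wg.
    rewrite (size_w w) (size_w wg) -size_hl hlw (perm_size (GL HM)) size_map size_hl.
    by rewrite cupw cdnw hdn.
  have wow : word_over R w.
    rewrite /word_over /w jt_build !all_cat -andbA; apply/and3P; split.
    - exact: word_over_build.
    - by rewrite all_map; apply/allP => k hk /=; apply: (HF d).
    - by rewrite /tpow all_nseq orbT.
  exists w; split; last by exists (size A); rewrite wAB rot_size_cat.
  split; last first.
    exists d, us; split; first by rewrite size_map size_iota.
    split => //; rewrite all_map; apply/allP => i _ /=; rewrite all_map.
    by apply/allP => k hk /=; apply: (HF i).
  split.
    apply: geo => //; first by rewrite sizew.
    by exists (evalw phi phiinv A); rewrite wAB rot_conj evBA.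
  exists 0%N, d, 0%N, us; split; first by rewrite size_map size_iota.
  split; last by rewrite /= cats0.
  rewrite all_map; apply/allP => i _ /=; rewrite all_map.
  by apply/allP => k hk /=; apply: (HF i).
- move=> m m0 gm.
  have esm : es wg = m by rewrite -gm HgE.
  have cdn0 : cdn wg = 0%N.
    set M := [seq (p.1 + (- (p.1 %/ Posz m)%Z) * Posz m, p.2) | p <- L].
    have HM : forall p, p \in M -> (0 <= p.1) && (p.1 < Posz m).
      move=> p /mapP [q hq ->] /=.
      have -> : q.1 + - (q.1 %/ Posz m)%Z * Posz m = (q.1 %% Posz m)%Z.
        by rewrite [X in X + _](divz_eq _ (Posz m)) mulNr addrAC subrr add0r.
      by rewrite modz_ge0 ?ltz_pmod //; lia.
    set F := FM M.
    have HF : forall i k, k \in F i -> k \in R.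
      move=> i k /mapP [p]; rewrite mem_filter => /andP[_ /mapP [q hq ->]] -> /=.
      exact: (hl_R Hwo q hq).
    set w' := build F m.
    have evw : evalw phi phiinv w' = (val M, Posz m).
      rewrite evalw_val hl_build /val (perm_big _ (GL HM)) -/(val M).
      by rewrite /es (proj1 (cnt_build F m)) (proj2 (cnt_build F m)) subr0.
    have [h Hh] := Req_conj' (Req_val (Posz m) (fun p => - (p.1 %/ Posz m)%Z) L).
    have := Hmin h w' (word_over_build HF); rewrite evw -/M Hh HgE esm => /(_ erefl).
    rewrite (size_w w') (size_w wg) -!size_hl /w' hl_build (perm_size (GL HM)) size_map.
    rewrite (proj1 (cnt_build F m)) (proj2 (cnt_build F m)).
    move: esm; rewrite /es -/L; move: (cup wg) (cdn wg) (size L) => x y z; lia.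
  have cupm : cup wg = m by move: esm; rewrite /es cdn0; lia.
  have [us [v [Hwg [h1 [h2 h3]]]]] := dec _ _ Hwo cdn0.
  case: us Hwg h1 h3 => [|u0 us'] Hwg h1 h3; first by move: h3; rewrite cupm /=; lia.
  set A := flatten [seq u ++ [:: inr true] | u <- u0 :: us'].
  set w := v ++ A.
  have wow : word_over R w.
    by move: Hwo; rewrite /word_over Hwg /w !all_cat andbC.
  exists w; split; last by exists (size v); rewrite /w rot_size_cat -Hwg.
  split.
    apply: geo => //; first by rewrite /w Hwg !size_cat addnC.
    by exists (evalw phi phiinv v); rewrite /w rot_conj -Hwg Hev.
  exists ((v ++ u0) :: us'); split; first by rewrite /= -cupm -h3.
  split; first by move: h1; rewrite /= all_cat h2 => ->.
  by rewrite /w /A /= !catA.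
Qed.

End S.

Theorem lemma2p2 (K : zmodType) (phi phiinv : K -> K)
  (phi_add : {morph phi : x y / x + y})
  (phiK : cancel phi phiinv) (phiinvK : cancel phiinv phi)
  (R : seq K) (R_sym : forall k, k \in R -> - k \in R)
  (S_gen : forall g : K * int, exists w, word_over R w /\ evalw phi phiinv w = g)
  (g : K * int) (hg : min_conj_rep phi phiinv R g) :
  (g.2 = 0 ->
     exists w, inC0 phi phiinv R w /\ exists j : nat, evalw phi phiinv (rot j w) = g) /\
  (forall m : nat, (0 < m)%N -> g.2 = m%:Z ->
     exists w, inCm phi phiinv R m w /\ exists j : nat, evalw phi phiinv (rot j w) = g).
Proof. exact: (@main K phi phiinv phi_add phiK phiinvK R g hg). Qed.
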